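(* Let $T_0,\dots,T_n$ be second-order rational operators. Then $T_0\to T_1\to\cdots\to T_n$ is an $n$-step rational Darboux transformation if and only if it is a factorization chain.
   Context: $D=d/dz$. An $n$-th order rational operator is $\sum_{k=0}^n p_k(z)D^k$ with rational $p_k$, $p_n\ne0$. $T_0\to\cdots\to T_n$ is an $n$-step rational Darboux transformation if there exist first-order rational operators $A_1,\dots,A_n$ with $A_kT_{k-1}=T_kA_k$ for $k=1,\dots,n$. It is a factorization chain if there exist first-order rational operators $A_k,B_k$ and constants $\lambda_k$ ($k=1,\dots,n$) with $T_{k-1}=B_kA_k+\lambda_k$ and $T_k=A_kB_k+\lambda_k$ for $k=1,\dots,n$. *)

(* Defs.v *)
From HB Require Import structures.
From mathcomp Require Import all_boot all_order all_algebra generic_quotient fraction.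
Set Implicit Arguments. Unset Strict Implicit. Unset Printing Implicit Defensive.
Import Order.TTheory GRing.Theory Num.Theory.
Local Open Scope ring_scope.

Notation ratfun F := {fraction {poly F}}.
Notation tofrac := (@FracField.tofrac _).

(* The derivation d/dz on rational functions, computed on a representative p/q:
   (p/q)' = (p' q - p q') / q^2  (independent of the representative). *)
Definition rderiv (F : numClosedFieldType) (x : ratfun F) : ratfun F :=
  let r := repr x in
  let p := \n_r in let q := \d_r in
  tofrac (p^`() * q - p * q^`()) / tofrac (q ^+ 2).

(* A rational differential operator  sum_k p_k(z) D^k  is represented by the
   polynomial  sum_k p_k X^k  in {poly (ratfun F)} (X standing for D).
   Its order is  size P - 1  (the zero operator has size 0). *)
Notation ratop F := {poly (ratfun F)}.

(* Composition of operators: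
   (a D^i) o (b D^j) = a * sum_(l <= i) C(i,l) b^(l) D^(i-l+j). *)
Definition opmul (F : numClosedFieldType) (P Q : ratop F) : ratop F :=
  \sum_(i < size P) \sum_(l < i.+1)
     (P`_i * ('C(i, l))%:R) *: (map_poly (iter l (@rderiv F)) Q * 'X^(i - l)).

Definition has_order (F : numClosedFieldType) (n : nat) (P : ratop F) : Prop :=
  size P = n.+1.

Definition constop (F : numClosedFieldType) (c : F) : ratop F := (tofrac c%:P)%:P.

Definition darboux_chain (F : numClosedFieldType) (n : nat)
    (T : nat -> ratop F) : Prop :=
  exists A : nat -> ratop F,
    forall k, (k < n)%N ->
      has_order 1 (A k) /\ opmul (A k) (T k) = opmul (T k.+1) (A k).

Definition factorization_chain (F : numClosedFieldType) (n : nat)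
    (T : nat -> ratop F) : Prop :=
  exists (A B : nat -> ratop F) (lam : nat -> F),
    forall k, (k < n)%N ->
      [/\ has_order 1 (A k), has_order 1 (B k),
          T k = opmul (B k) (A k) + constop (lam k) &
          T k.+1 = opmul (A k) (B k) + constop (lam k)].

(* Main.v *)
Require Import Defs.
From mathcomp Require Import all_boot all_order all_algebra generic_quotient fraction.
From mathcomp Require Import ring.
Set Implicit Arguments. Unset Strict Implicit. Unset Printing Implicit Defensive.
Import Order.TTheory GRing.Theory Num.Theory.
Local Open Scope ring_scope.

Section Frac.
Variable R : idomainType.
Lemma frac_repr (x : {fraction R}) :
  x = tofrac (\n_(repr x)) / tofrac (\d_(repr x)).
Proof.
rewrite -{1}[x]reprK.
set r := repr x.
unlock FracField.tofrac.
rewrite -[_^-1]FracField.pi_inv -[_ * _]FracField.pi_mul.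
rewrite /FracField.mulf /FracField.invf /= !numden_Ratio ?(oner_neq0, denom_ratioP) //.
by rewrite mulr1 mul1r Ratio_numden.
Qed.
End Frac.

Section FieldId.
Variable K : fieldType.
Lemma fid_add (P Q U V : K) : Q != 0 -> V != 0 -> P / Q + U / V = (P * V + U * Q) / (Q * V).
Proof. by move=> hq hv; field; rewrite hq hv. Qed.
Lemma fid_mul (P Q U V : K) : Q != 0 -> V != 0 -> P / Q * (U / V) = (P * U) / (Q * V).
Proof. by move=> hq hv; field; rewrite hq hv. Qed.
Lemma fid_Dadd (P Q U V P' Q' U' V' : K) : Q != 0 -> V != 0 ->
 ((P' * V + P * V' + (U' * Q + U * Q')) * (Q * V) - (P * V + U * Q) * (Q' * V + Q * V')) / (Q * V * (Q * V)) = (P' * Q - P * Q') / (Q * Q) + (U' * V - U * V') / (V * V).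
Proof. by move=> hq hv; field; rewrite hq hv. Qed.
Lemma fid_Dmul (P Q U V P' Q' U' V' : K) : Q != 0 -> V != 0 ->
 ((P' * U + P * U') * (Q * V) - P * U * (Q' * V + Q * V')) / (Q * V * (Q * V)) = (P' * Q - P * Q') / (Q * Q) * (U / V) + P / Q * ((U' * V - U * V') / (V * V)).
Proof. by move=> hq hv; field; rewrite hq hv. Qed.
End FieldId.

Section Deriv.
Variable F : numClosedFieldType.
Local Notation K := (ratfun F).
Local Notation Dr := (@rderiv F).
Local Notation tf := (@tofrac {poly F}).

Lemma tf_neq0 (q : {poly F}) : q != 0 -> tf q != 0.
Proof. by rewrite tofrac_eq0. Qed.

Lemma rderivE (p q : {poly F}) : q != 0 ->
  Dr (tf p / tf q) = tf (p^`() * q - p * q^`()) / tf (q ^+ 2).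
Proof.
move=> q0.
rewrite /rderiv.
set x := tf p / tf q.
have hx := frac_repr x.
set p0 := \n_(repr x) in hx *.
set q0' := \d_(repr x) in hx *.
have q00 : q0' != 0 by apply: denom_ratioP.
have e : p0 * q = p * q0'.
  apply/eqP; rewrite -tofrac_eq !tofracM; apply/eqP.
  have := hx; rewrite /x => /eqP; rewrite eqr_div ?tf_neq0 // => /eqP.
  by move=> ->; rewrite mulrC.
have e' := congr1 (@deriv _) e.
rewrite !derivM in e'.
apply/eqP; rewrite eqr_div ?tf_neq0 ?expf_neq0 //; apply/eqP.
rewrite -!tofracM; congr tf.
apply/eqP; rewrite -subr_eq0; apply/eqP.
have -> : (p0^`() * q0' - p0 * q0'^`()) * q ^+ 2 - (p^`() * q - p * q^`()) * q0' ^+ 2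
   = q * q0' * ((p0^`() * q + p0 * q^`()) - (p^`() * q0' + p * q0'^`()))
     + (q0'^`() * q + q^`() * q0') * (p * q0' - p0 * q) by ring.
by rewrite e e' !subrr mulr0 add0r mulr0.
Qed.

Lemma fracP (x : K) : exists p q, q != 0 /\ x = tf p / tf q.
Proof. exists (\n_(repr x)), (\d_(repr x)); split; [exact: denom_ratioP | exact: frac_repr]. Qed.

Lemma DrD x y : Dr (x + y) = Dr x + Dr y.
Proof.
have [p [q [q0 ->]]] := fracP x; have [u [v [v0 ->]]] := fracP y.
Timeout 20 have hq := tf_neq0 q0.
Timeout 20 have hv := tf_neq0 v0.

Timeout 20 rewrite (@fid_add K (tf p) (tf q) (tf u) (tf v) hq hv).

Timeout 20 rewrite -!tofracM -tofracD.

Timeout 20 rewrite !rderivE ?mulf_neq0 //.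

Timeout 20 rewrite !(derivD, derivM) !(tofracD, tofracM, tofracB, tofracN, tofracXn).

Timeout 20 exact: (@fid_Dadd K _ _ _ _ _ _ _ _ hq hv).
Qed.
Lemma DrM x y : Dr (x * y) = Dr x * y + x * Dr y.
Proof.
have [p [q [q0 ->]]] := fracP x; have [u [v [v0 ->]]] := fracP y.
have hq := tf_neq0 q0; have hv := tf_neq0 v0.
rewrite (@fid_mul K (tf p) (tf q) (tf u) (tf v) hq hv).
rewrite -!tofracM.
rewrite !rderivE ?mulf_neq0 //.
rewrite !(derivD, derivM) !(tofracD, tofracM, tofracB, tofracN, tofracXn).
exact: (@fid_Dmul K _ _ _ _ _ _ _ _ hq hv).
Qed.

Lemma DrC (c : F) : Dr (tf c%:P) = 0.
Proof.
have -> : tf c%:P = tf c%:P / tf (1%:P) by rewrite polyC1 tofrac1 divr1.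
rewrite rderivE ?polyC1 ?oner_neq0 //.
by rewrite !derivC mul0r mulr0 subrr tofrac0 mul0r.
Qed.

Lemma Dr0 : Dr 0 = 0.
Proof. by have := DrC 0; rewrite tofrac0. Qed.

Lemma DrN x : Dr (- x) = - Dr x.
Proof. by apply/eqP; rewrite -subr_eq0 opprK -DrD addNr Dr0. Qed.

Lemma DrB x y : Dr (x - y) = Dr x - Dr y.
Proof. by rewrite DrD DrN. Qed.

Lemma Dr1 : Dr 1 = 0.
Proof. by have := DrC 1; rewrite tofrac1. Qed.

Lemma Drn m : Dr m%:R = 0.
Proof. by elim: m => [|m IH]; rewrite ?Dr0 // mulrS DrD Dr1 IH addr0. Qed.

Lemma deriv_sizeS (p : {poly F}) m : size p = m.+2 ->
  size p^`() = m.+1 /\ lead_coef p^`() = lead_coef p *+ m.+1.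
Proof.
move=> hs.
have hc : p^`()`_m = lead_coef p *+ m.+1 by rewrite coef_deriv lead_coefE hs.
have hle : (size p^`() <= m.+1)%N.
  apply/leq_sizeP => j hj; rewrite coef_deriv nth_default ?mul0rn // hs ltnS //.
have hne : p^`()`_m != 0.
  by rewrite hc mulrn_eq0 /= lead_coef_eq0 -size_poly_eq0 hs.
have hsz : size p^`() = m.+1.
  apply/anti_leq; rewrite hle /= ltnNge; apply/negP => h.
  by move: hne; rewrite nth_default // eqxx.
by split=> //; rewrite lead_coefE hsz /= hc.
Qed.

Lemma deriv_size1 (p : {poly F}) : (size p <= 1)%N -> p^`() = 0.
Proof. by move/size1_polyC => ->; rewrite derivC. Qed.

Lemma wr_size (p q : {poly F}) : p != 0 -> q != 0 ->
  p^`() * q = p * q^`() -> size p = size q.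
Proof.
move=> p0 q0 e.
have [m hm] : exists m, size p = m.+1.
  by exists (size p).-1; rewrite prednK // lt0n size_poly_eq0.

have [k hk] : exists k, size q = k.+1.
  by exists (size q).-1; rewrite prednK // lt0n size_poly_eq0.

case: m hm => [|m] hm; case: k hk => [|k] hk; rewrite ?hm ?hk.
- by [].
-  Timeout 20 have [h1 _] := deriv_sizeS hk.
  Timeout 20 move: e; rewrite deriv_size1 ?hm // mul0r => /esym/eqP.
  
  Timeout 20 rewrite mulf_eq0 (negbTE p0) /= -size_poly_eq0 h1 //.
-  have [h1 _] := deriv_sizeS hm.
  Timeout 20 move: e; rewrite (deriv_size1 (p := q)) ?hk // mulr0 => /eqP.
  Timeout 20 rewrite mulf_eq0 (negbTE q0) orbF -size_poly_eq0 h1 //.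
-  have [_ l1] := deriv_sizeS hm; have [_ l2] := deriv_sizeS hk.
  Timeout 20 have := congr1 (@lead_coef _) e; rewrite !lead_coefM l1 l2.
  
  move=> E.
  have hl : lead_coef p * lead_coef q != 0 by rewrite mulf_neq0 ?lead_coef_eq0.
  have E2 : (lead_coef p * lead_coef q) * (m.+1)%:R = (lead_coef p * lead_coef q) * (k.+1)%:R.
    rewrite -[lead_coef p *+ _]mulr_natr -[lead_coef q *+ _]mulr_natr in E.
    Timeout 20 by rewrite [LHS]mulrAC E mulrA.
  
  Timeout 20 move/(mulfI hl)/eqP: E2; rewrite eqr_nat => /eqP [->] //.
Qed.

Definition cst (x : K) : F := lead_coef (\n_(repr x)) / lead_coef (\d_(repr x)).

Lemma Dr_eq0 x : Dr x = 0 -> x = tf (cst x)%:P.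
Proof.
move=> h; have hx := frac_repr x; rewrite /cst.
set p := \n_(repr x) in hx *; set q := \d_(repr x) in hx *.
have q0 : q != 0 by apply: denom_ratioP.
rewrite {1}hx; rewrite hx in h.
move: h; rewrite rderivE // => /eqP; rewrite mulf_eq0 invr_eq0 !tofrac_eq0 expf_eq0 (negbTE q0) andbF orbF.
rewrite subr_eq0 => /eqP e.
have [->|p0] := eqVneq p 0.
  by rewrite lead_coef0 tofrac0 !mul0r polyC0 tofrac0.
have hs := wr_size p0 q0 e.
set s := lead_coef q *: p - lead_coef p *: q.
have es : s^`() * q = s * q^`().
  rewrite /s !derivB !derivZ -!mul_polyC.
  apply/eqP; rewrite -subr_eq0; apply/eqP.
  transitivity ((lead_coef q)%:P * (p^`() * q - p * q^`())); first by ring.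
  by rewrite e subrr mulr0.
have ss : (size s < size q)%N.
  have sq : (0 < size q)%N by rewrite lt0n size_poly_eq0.
  rewrite -(prednK sq) ltnS; apply/leq_sizeP => j hj.
  rewrite /s coefB !coefZ.
  move: hj; rewrite leq_eqVlt => /orP [/eqP hj | hj].
    by rewrite -hj -{1}hs -!lead_coefE mulrC subrr.
  have hq' : (size q <= j)%N by rewrite -(prednK sq).
  have hp' : (size p <= j)%N by rewrite hs.
  by rewrite !nth_default ?mulr0 ?subrr.
have s0 : s = 0.
  apply/eqP; apply/negPn; apply/negP => sn.
  by have := wr_size sn q0 es => hh; move: ss; rewrite hh ltnn.
have lq0 : lead_coef q != 0 by rewrite lead_coef_eq0.
have ep : p = (lead_coef p / lead_coef q)%:P * q.
  have e2 : lead_coef q *: p = lead_coef p *: q.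
    by apply/eqP; rewrite -subr_eq0 -/s s0.
  rewrite mul_polyC -[LHS]scale1r -(mulVf lq0) -[(_ * _) *: p]scalerA e2 scalerA.
  by rewrite [_^-1 * _]mulrC.
by rewrite {1}ep tofracM mulfK // tofrac_eq0.
Qed.

End Deriv.

Section Op.
Variable F : numClosedFieldType.
Local Notation K := (ratfun F).
Local Notation Dr := (@rderiv F).
Local Notation tf := (@tofrac {poly F}).

Fact Dl_key : unit. Proof. exact: tt. Qed.
Definition Dl := locked_with Dl_key (@rderiv F).
Lemma DlE : Dl = @rderiv F. Proof. exact: locked_withE. Qed.
Lemma DlD x y : Dl (x + y) = Dl x + Dl y. Proof. by rewrite DlE DrD. Qed.
Lemma DlM x y : Dl (x * y) = Dl x * y + x * Dl y. Proof. by rewrite DlE DrM. Qed.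
Lemma Dl0 : Dl 0 = 0. Proof. by rewrite DlE Dr0. Qed.
Lemma Dl_eq0 x : Dl x = 0 -> x = tofrac (cst x)%:P. Proof. by rewrite DlE; apply: Dr_eq0. Qed.

Lemma iterDr0 l : iter l Dr 0 = 0.
Proof. by elim: l => //= l ->; rewrite Dr0. Qed.

Lemma coef_opmul (P Q : ratop F) k : (size P <= 3)%N ->
 (opmul P Q)`_k = P`_0 * Q`_k
   + P`_1 * (Dl Q`_k + (if k is k'.+1 then Q`_k' else 0))
   + P`_2 * (Dl (Dl Q`_k) + (if k is k'.+1 then Dl Q`_k' + Dl Q`_k' else 0)
             + (if k is k'.+2 then Q`_k' else 0)).
Proof.
move=> hP; rewrite DlE /opmul.
rewrite (big_ord_widen 3 (fun i => \sum_(l < i.+1)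
     (P`_i * ('C(i, l))%:R) *: (map_poly (iter l Dr) Q * 'X^(i - l)))) //.
rewrite big_mkcond /=.
rewrite (eq_bigr (fun i : 'I_3 => \sum_(l < i.+1)
     (P`_i * ('C(i, l))%:R) *: (map_poly (iter l Dr) Q * 'X^(i - l)))); last first.
  move=> i _; case: ifP => // /negbT; rewrite -leqNgt => hi.
  by rewrite big1 // => l _; rewrite nth_default // mul0r scale0r.
rewrite !big_ord_recr big_ord0 /= !coefD !coefZ coef0 add0r.
rewrite !coefMXn !coef_map_id0 ?iterDr0 //= !bin0 !binn.
rewrite !big_ord0 !coef0 !add0r ?subn0 ?subnn ?subn0 ?bin1 !mulr1.
case: k => [|[|k]] /=; rewrite ?subn0 ?subSS ?subn0 /=. 
all: ring.
Qed.
Lemma solve_lin (c x y L R : K) : L = R -> x - y = c * (L - R) -> x = y.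
Proof. by move=> -> /eqP; rewrite subrr mulr0 subr_eq0 => /eqP. Qed.

Arguments solve_lin c {x y L R}.

Definition Bof (A T0 : ratop F) : ratop F :=
  let b1 := T0`_2 / A`_1 in
  let b0 := (T0`_1 - b1 * Dl A`_1 - b1 * A`_0) / A`_1 in
  Poly [:: b0; b1].
Definition cof (A T0 : ratop F) : F :=
  let b1 := T0`_2 / A`_1 in
  let b0 := (T0`_1 - b1 * Dl A`_1 - b1 * A`_0) / A`_1 in
  cst (T0`_0 - b0 * A`_0 - b1 * Dl A`_0).

Lemma nth_big (p : ratop F) n j : size p = n -> (n <= j)%N -> p`_j = 0.
Proof. by move=> <- h; rewrite nth_default. Qed.

Lemma lead_neq0 (p : ratop F) n : size p = n.+1 -> p`_n != 0.
Proof.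
move=> h; have : lead_coef p != 0.
  by rewrite lead_coef_eq0 -size_poly_eq0 h.
by rewrite lead_coefE h.
Qed.

Lemma step_fwd (A T0 T1 : ratop F) : size A = 2 -> size T0 = 3 -> size T1 = 3 ->
  opmul A T0 = opmul T1 A ->
  [/\ size (Bof A T0) = 2, T0 = opmul (Bof A T0) A + constop (cof A T0)
    & T1 = opmul A (Bof A T0) + constop (cof A T0)].
Proof.
move=> hA h0 h1 H.
have a1nz := lead_neq0 (n:=1) hA.
have t2nz := lead_neq0 (n:=2) h0.
have sA : (size A <= 3)%N by rewrite hA.
have s1 : (size T1 <= 3)%N by rewrite h1.
have A2 : A`_2 = 0 by apply: nth_big hA _.
have A3 : A`_3 = 0 by apply: nth_big hA _.
have T03 : T0`_3 = 0 by apply: nth_big h0 _.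
have E3 := congr1 (fun P : ratop F => P`_3) H.
have E2 := congr1 (fun P : ratop F => P`_2) H.
have E1 := congr1 (fun P : ratop F => P`_1) H.
have E0 := congr1 (fun P : ratop F => P`_0) H.
rewrite /= !coef_opmul // /= A2 A3 T03 ?Dl0 in E3 E2 E1 E0.
rewrite /Bof /cof.
set b1 := T0`_2 / A`_1.
set b0 := (T0`_1 - b1 * Dl A`_1 - b1 * A`_0) / A`_1.
set r := T0`_0 - b0 * A`_0 - b1 * Dl A`_0.
have b1nz : b1 != 0 := mulf_neq0 t2nz (invr_neq0 a1nz).
have ht2 : T0`_2 = b1 * A`_1 by rewrite /b1 (divfK a1nz).
have ht1 : T0`_1 = b0 * A`_1 + b1 * Dl A`_1 + b1 * A`_0.
  by rewrite /b0 (divfK a1nz); ring.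
have ht0 : T0`_0 = b0 * A`_0 + b1 * Dl A`_0 + r by rewrite /r; ring.
clearbody b1 b0 r.
rewrite ht2 ht1 ht0 in E3 E2 E1 E0.
rewrite !(DlD, DlM, Dl0) in E3 E2 E1 E0.
have hs2 : T1`_2 = b1 * A`_1.
  by apply: (mulIf a1nz); apply: (solve_lin (-1) E3); ring.
rewrite hs2 in E2 E1 E0.
have hs1 : T1`_1 = A`_0 * b1 + A`_1 * (Dl b1 + b0).
  by apply: (mulIf a1nz); apply: (solve_lin (-1) E2); ring.
rewrite hs1 in E1 E0.
have hs0 : T1`_0 = A`_0 * b0 + A`_1 * Dl b0 + r.
  by apply: (mulIf a1nz); apply: (solve_lin (-1) E1); ring.
rewrite hs0 in E0.
have hr : Dl r = 0.
  by apply: (mulIf a1nz); apply: (solve_lin 1 E0); ring.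
have hr' := Dl_eq0 hr.
have sB : (size (Poly [:: b0; b1]) <= 3)%N.
  by apply: leq_trans (size_Poly _) _.
split.
- by rewrite (@PolyK _ 0 [:: b0; b1] b1nz).
- rewrite /constop -hr'; apply/polyP => j.
  rewrite coefD coef_opmul // coefC.
  case: j => [|[|[|j]]]; rewrite ?coef_Poly /=.
  + by rewrite ht0; ring.
  + by rewrite ht1; ring.
  + by rewrite ht2 A2 Dl0; ring.
  + have z0 : T0`_j.+3 = 0 by apply: nth_big h0 _.
    have z1 : A`_j.+3 = 0 by apply: nth_big hA _.
    have z2 : A`_j.+2 = 0 by apply: nth_big hA _.
    by rewrite z0 z1 z2 !Dl0; ring.
- rewrite /constop -hr'; apply/polyP => j.
  rewrite coefD coef_opmul // coefC.
  case: j => [|[|[|j]]]; rewrite ?coef_Poly /=.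
  + by rewrite hs0 A2; ring.
  + by rewrite hs1 A2; ring.
  + by rewrite hs2 A2 !Dl0; ring.
  + have z0 : T1`_j.+3 = 0 by apply: nth_big h1 _.
    by rewrite z0 A2 !nth_nil !Dl0; ring.
Qed.

Lemma Dlc (c : F) : Dl (tofrac c%:P) = 0.
Proof. by rewrite DlE DrC. Qed.

Lemma step_bwd (A B T0 T1 : ratop F) (c : F) :
  size A = 2 -> size B = 2 -> size T0 = 3 -> size T1 = 3 ->
  T0 = opmul B A + constop c -> T1 = opmul A B + constop c ->
  opmul A T0 = opmul T1 A.
Proof.
move=> hA hB h0 h1 e0 e1.
have sA : (size A <= 3)%N by rewrite hA.
have sB : (size B <= 3)%N by rewrite hB.
have s1 : (size T1 <= 3)%N by rewrite h1.
have A2 : A`_2 = 0 by apply: nth_big hA _.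
have A3 : A`_3 = 0 by apply: nth_big hA _.
have B2 : B`_2 = 0 by apply: nth_big hB _.
have T03 : T0`_3 = 0 by apply: nth_big h0 _.
have hc := Dlc c.
have t0 := congr1 (fun P : ratop F => P`_0) e0.
have t1 := congr1 (fun P : ratop F => P`_1) e0.
have t2 := congr1 (fun P : ratop F => P`_2) e0.
have u0 := congr1 (fun P : ratop F => P`_0) e1.
have u1 := congr1 (fun P : ratop F => P`_1) e1.
have u2 := congr1 (fun P : ratop F => P`_2) e1.
rewrite /= /constop !coefD !coef_opmul // !coefC /= A2 B2 ?Dl0 in t0 t1 t2 u0 u1 u2.
apply/polyP => j.
rewrite !coef_opmul //.
case: j => [|[|[|[|j]]]] /=.
- rewrite t0 u0 u1 u2 A2 !(DlD, DlM, Dl0, hc); ring.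
- rewrite t0 t1 u0 u1 u2 A2 !(DlD, DlM, Dl0, hc); ring.
- rewrite t0 t1 t2 u0 u1 u2 A2 !(DlD, DlM, Dl0, hc); ring.
- rewrite T03 t1 t2 u0 u1 u2 A2 A3 !(DlD, DlM, Dl0, hc); ring.
- have z1 : T0`_j.+4 = 0 by apply: nth_big h0 _.
  have z2 : T0`_j.+3 = 0 by apply: nth_big h0 _.
  have z3 : A`_j.+4 = 0 by apply: nth_big hA _.
  have z4 : A`_j.+3 = 0 by apply: nth_big hA _.
  have z5 : A`_j.+2 = 0 by apply: nth_big hA _.
  rewrite z1 z2 z3 z4 z5 A2 !Dl0; ring.
Qed.

End Op.

Local Close Scope ring_scope.

Theorem mainTheorem2 (F : numClosedFieldType) (n : nat) (T : nat -> ratop F) :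
  (forall k, (k <= n)%N -> has_order 2 (T k)) ->
  (darboux_chain n T <-> factorization_chain n T).
Proof.
move=> hT; split.
- case=> A HA.
  exists A, (fun k => Bof (A k) (T k)), (fun k => cof (A k) (T k)) => k hk.
  have [oA eA] := HA k hk.
  have h0 : size (T k) = 3 := hT k (ltnW hk).
  have h1 : size (T k.+1) = 3 := hT k.+1 hk.
  have [sB e0 e1] := step_fwd oA h0 h1 eA.
  by split.
- case=> A [B [lam H]].
  exists A => k hk.
  have [oA oB e0 e1] := H k hk.
  split=> //.
  exact: (step_bwd oA oB (hT k (ltnW hk)) (hT k.+1 hk) e0 e1).
Qed.
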